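(* Let $S=(\mathcal{E},\Sigma,X,\mathcal{O})$ be an entity. Then $S$ is outcome determined (i.e. for all $(e,p),(f,q)\in\mathcal{E}\times\Sigma$, $O(e,p)=O(f,q)$ implies $(e,p)=(f,q)$) if and only if the central eigen closure operator $cl_{eig}$ on $\mathcal{E}\times\Sigma$ satisfies the $T_0$ separation axiom.
   Context: An entity $S=(\mathcal{E},\Sigma,X,\mathcal{O})$ consists of a set $\mathcal{E}$ (experiments), a set $\Sigma$ (states), and for each $e\in\mathcal{E}$, $p\in\Sigma$ a nonempty set $O(e,p)$ (possible outcomes), with $X=\bigcup_{e,p}O(e,p)$ and $\mathcal{O}=\{O(e,p)\}$. The central eigen map $eig:\mathcal{P}(X)\to\mathcal{P}(\mathcal{E}\times\Sigma)$ is defined by $(e,p)\in eig(A)\iff O(e,p)\subseteq A$. Let $\mathcal{Y}_{eig}=\{eig(A): A\subseteq X\}$; it is a closure system (contains $\emptyset$ and $\mathcal{E}\times\Sigma$ and is closed under arbitrary intersections), and $cl_{eig}(K)=\bigcap\{Y\in\mathcal{Y}_{eig}: K\subseteq Y\}$ for $K\subseteq\mathcal{E}\times\Sigma$. A closure operator $cl$ on a set $W$ satisfies $T_0$ iff $cl(\{w\})=cl(\{v\})$ implies $w=v$. *)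

(* Defs.v *)
From Stdlib Require Import Classical.

Definition set_eq {T : Type} (A B : T -> Prop) : Prop := forall x, A x <-> B x.

(* An entity S = (E, Sigma, X, O): O e p is the outcome set O(e,p) ⊆ X,
   nonempty, and X is the union of all O(e,p). *)
Record entity : Type := {
  Exp : Type;
  St : Type;
  Out : Type;
  O : Exp -> St -> Out -> Prop;
  O_nonempty : forall e p, exists x, O e p x;
  Out_union : forall x : Out, exists e p, O e p x
}.

Definition eig (S : entity) (A : Out S -> Prop) : Exp S * St S -> Prop :=
  fun ep => forall x, O S (fst ep) (snd ep) x -> A x.

Definition Y_eig (S : entity) (Y : Exp S * St S -> Prop) : Prop :=
  exists A : Out S -> Prop, set_eq Y (eig S A).

Definition cl_eig (S : entity) (K : Exp S * St S -> Prop) : Exp S * St S -> Prop :=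
  fun w => forall Y, Y_eig S Y -> (forall v, K v -> Y v) -> Y w.

Definition T0 {W : Type} (cl : (W -> Prop) -> (W -> Prop)) : Prop :=
  forall w v : W, set_eq (cl (fun u => u = w)) (cl (fun u => u = v)) -> w = v.

Definition outcome_determined (S : entity) : Prop :=
  forall ep fq : Exp S * St S,
    set_eq (O S (fst ep) (snd ep)) (O S (fst fq) (snd fq)) -> ep = fq.

(* Main.v *)
Require Import Defs.

Lemma cl_to_O (S : entity) (w u : Exp S * St S) :
  cl_eig S (fun z => z = w) u -> forall x, O S (fst u) (snd u) x -> O S (fst w) (snd w) x.
Proof.
  intros H. apply (H (eig S (O S (fst w) (snd w)))).
  - exists (O S (fst w) (snd w)). intro; tauto.
  - intros v ->. unfold eig. auto.
Qed.

Lemma self_cl (S : entity) (w : Exp S * St S) : cl_eig S (fun z => z = w) w.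
Proof. intros Y _ H. apply H; reflexivity. Qed.

Theorem mainTheorem2 (S : entity) :
  outcome_determined S <-> T0 (cl_eig S).
Proof.
  split.
  - intros OD w v H. apply OD. intro x.
    pose proof (proj1 (H w) (self_cl S w)) as Hw.
    pose proof (proj2 (H v) (self_cl S v)) as Hv.
    split; intro Hx.
    + exact (cl_to_O S v w Hw x Hx).
    + exact (cl_to_O S w v Hv x Hx).
  - intros T w v H. apply T. intro u.
    split; intros Hu Y [A HA] Hsub; apply Hu; try (exists A; exact HA); intros z ->.
    + apply HA. intros x Hx. assert (Yv : Y v) by (apply Hsub; reflexivity).
      apply HA in Yv. apply Yv. apply H. exact Hx.
    + apply HA. intros x Hx. assert (Yw : Y w) by (apply Hsub; reflexivity).
      apply HA in Yw. apply Yw. apply H. exact Hx.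
Qed.
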